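(* Let $2\le w<n$. If a Steiner system $S(2,w,n)$ exists, then $q'_0(2,w,n)=\frac{n-1}{w-1}+1$.
   Context: $\mathbb{Z}_q=\{0,\dots,q-1\}$ (an alphabet); $\mathrm{wt}$ = number of nonzero coordinates; $d$ = Hamming distance; $J_q(n,w)$ = weight-$w$ words of $\mathbb{Z}_q^n$. An $(n,w,d)_q$ code of size $M$ is a subset $C\subseteq J_q(n,w)$ with $|C|=M$ and pairwise distances at least $d$. A Steiner system $S(t,k,n)$ is a pair $(N,B)$, $|N|=n$, $B$ a set of $k$-subsets (blocks) of $N$ with every $t$-subset of $N$ in exactly one block. For $t,k,n$ such that an $S(t,k,n)$ exists, $q'_0(t,k,n)$ is the smallest $q$ for which an $(n,k,2k-t+1)_q$ code of size $\binom{n}{t}/\binom{k}{t}$ exists. *)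

(* Defs.v *)
From mathcomp Require Import all_boot.
Unset Implicit Arguments.

Definition word (n q : nat) := {ffun 'I_n -> 'I_q}.

Definition wt {n q} (x : word n q) : nat := #|[set i | val (x i) != 0%N]|.

Definition hdist {n q} (x y : word n q) : nat := #|[set i | x i != y i]|.

Definition is_code (n w d q M : nat) (C : {set word n q}) : Prop :=
  [/\ #|C| = M,
      (forall x, x \in C -> wt x = w) &
      (forall x y, x \in C -> y \in C -> x != y -> d <= hdist x y)].

Definition code_exists (n w d q M : nat) : Prop :=
  exists C : {set word n q}, is_code n w d q M C.

Definition steiner_system (t k n : nat) (B : {set {set 'I_n}}) : Prop :=
  (forall b, b \in B -> #|b| = k) /\
  (forall T : {set 'I_n}, #|T| = t -> #|[set b in B | T \subset b]| = 1).

Definition steiner_exists (t k n : nat) : Prop :=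
  exists B : {set {set 'I_n}}, steiner_system t k n B.

Definition is_q0' (t k n q : nat) : Prop :=
  code_exists n k (2 * k - t + 1) q ('C(n, t) %/ 'C(k, t)) /\
  (forall q', code_exists n k (2 * k - t + 1) q' ('C(n, t) %/ 'C(k, t)) -> q <= q').

(* Main.v *)
Require Import Defs.
From mathcomp Require Import all_boot.
From mathcomp Require Import zify.

Lemma bin2_mul2 k : 'C(k, 2) * 2 = k * k.-1.
Proof.
elim: k => [|k IH] //. rewrite binS bin1 mulnDl IH /=. case: k {IH} => //= k. lia.
Qed.

Lemma card_sep (X : finType) (A : {set X}) (P : pred X) :
  #|[set x in A | P x]| = \sum_(x in A) (P x : nat).
Proof.
rewrite -sum1_card big_mkcond /= [RHS]big_mkcond /=.
apply: eq_bigr => x _; rewrite !inE; by case: (x \in A); case: (P x).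
Qed.

Lemma double_count (X I : finType) (A : {set X}) (R : X -> I -> bool) :
  \sum_(i : I) #|[set x in A | R x i]| = \sum_(x in A) #|[set i | R x i]|.
Proof.
under eq_bigr => i _ do rewrite card_sep.
rewrite exchange_big /=. apply: eq_bigr => x _.
have -> : [set i | R x i] = [set i in [set: I] | R x i] by apply/setP => i; rewrite !inE.
rewrite card_sep. apply: eq_bigl => i. by rewrite inE.
Qed.

Lemma steiner_deg n w B (hw: 2<=w) (S : steiner_system 2 w n B) (x : 'I_n) :
  #|[set b in B | x \in b]| * (w-1) = n-1.
Proof.
case: S => Hk Ht.
have := @double_count _ _ [set b in B | x \in b] (fun b y => y \in b :\ x).
have -> : \sum_(b in [set b in B | x \in b]) #|[set y | y \in b :\ x]| =
          #|[set b in B | x \in b]| * (w - 1).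
  rewrite -sum_nat_const; apply: eq_bigr => b; rewrite inE => /andP [bB xb].
  have -> : [set y | y \in b :\ x] = b :\ x by apply/setP => y; rewrite inE.
  have := cardsD1 x b; rewrite xb (Hk b bB) => ->. by rewrite add1n subn1.
move=> <-.
rewrite (bigD1 x) //=.
have -> : #|[set b0 in [set b in B | x \in b] | x \in b0 :\ x]| = 0.
  apply: eq_card0 => b; by rewrite !inE eqxx /= andbF.
rewrite add0n.
have -> : \sum_(i < n | i != x) #|[set b0 in [set b in B | x \in b] | i \in b0 :\ x]|
        = \sum_(i < n | i != x) 1.
  apply: eq_bigr => y yx.
  rewrite -(Ht [set x; y]); last by rewrite cards2 eq_sym yx.
  apply: eq_card => b; rewrite !inE yx /= subUset !sub1set andbA.
  by case: (b \in B); case: (x \in b); case: (y \in b).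
rewrite sum1_card.
have := cardC1 x; rewrite card_ord => ->.
by rewrite subn1.
Qed.

Lemma steiner_size n w B (hw: 2<=w) (hn : w < n) (S : steiner_system 2 w n B) :
  #|B| * w = n * ((n-1) %/ (w-1)) /\ 'C(n,2) %/ 'C(w,2) = #|B|
  /\ forall x : 'I_n, #|[set b in B | x \in b]| = (n-1) %/ (w-1).
Proof.
have Hd x : #|[set b in B | x \in b]| = (n-1) %/ (w-1).
  by rewrite -(steiner_deg _ _ _ hw S x) mulnK //; lia.
have H1 : #|B| * w = n * ((n-1) %/ (w-1)).
  have := @double_count _ _ B (fun b (y : 'I_n) => y \in b).
  under eq_bigr => y _ do rewrite Hd.
  rewrite sum_nat_const card_ord => ->.
  rewrite -sum_nat_const; apply: eq_bigr => b bB.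
  case: S => Hk _; rewrite -(Hk b bB); apply: eq_card => y; by rewrite inE.
split => //; split => //.
have Hr := steiner_deg _ _ _ hw S.
have e : 'C(n,2) = #|B| * 'C(w,2).
  have a := bin2_mul2 n; have b := bin2_mul2 w.
  have c : #|B| * w * (w-1) = n * (n-1).
    have x0 : 'I_n by exists 0; lia.
    by rewrite H1 -mulnA -(Hd x0) (Hr x0).
  have : 'C(n,2) * 2 = #|B| * 'C(w,2) * 2.
    by rewrite a -mulnA b mulnA -!subn1 c.
  lia.
by rewrite e mulnK // bin_gt0.
Qed.

Lemma card_nonzero q : #|[set k : 'I_q | val k != 0]| <= q.-1.
Proof.
case: q => [|q]; first by apply: leq_trans (max_card _) _; rewrite card_ord.
apply: (@leq_trans #|[set~ (ord0 : 'I_q.+1)]|); last by rewrite cardsC1 card_ord.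
apply: subset_leq_card; apply/subsetP => k; rewrite !inE; apply: contra => /eqP -> //.
Qed.

Lemma lower_bound n w q (hw : 2 <= w) (C : {set word n q}) :
  (forall x, x \in C -> wt x = w) ->
  (forall x y, x \in C -> y \in C -> x != y -> 2 * w - 2 + 1 <= hdist x y) ->
  forall i : 'I_n, #|[set x in C | val (x i) != 0]| <= q.-1.
Proof.
move=> Hw Hd i.
have key : {in [set x in C | val (x i) != 0] &, injective (fun x : word n q => x i)}.
  move=> x y; rewrite !inE => /andP [xC xi] /andP [yC yi] exy.
  apply/eqP; apply: contraT => nxy.
  have := Hd x y xC yC nxy.
  set Sx := [set j | val (x j) != 0]; set Sy := [set j | val (y j) != 0].
  have sub : [set j | x j != y j] \subset (Sx :|: Sy) :\ i.
    apply/subsetP => j; rewrite !inE => nj.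
    have -> : j != i by apply: contraNneq nj => ->; rewrite exy.
    apply: contraR nj; rewrite negb_or !negbK => /andP [/eqP h1 /eqP h2].
    by apply/eqP/val_inj; rewrite /= h1 h2.
  have c1 : hdist x y <= #|(Sx :|: Sy) :\ i| := subset_leq_card sub.
  have c2 := cardsD1 i (Sx :|: Sy).
  have iU : i \in Sx :|: Sy by rewrite !inE xi.
  have c3 := cardsU Sx Sy.
  have iI : i \in Sx :&: Sy by rewrite !inE xi yi.
  have c4 : 0 < #|Sx :&: Sy| by apply/card_gt0P; exists i.
  have ex : #|Sx| = w by apply: Hw.
  have ey : #|Sy| = w by apply: Hw.
  have c5 : #|Sx :&: Sy| <= #|Sx| by apply: subset_leq_card; apply: subsetIl.
  move: c1 c2 c3 c5; rewrite iU ex ey /= => c1 c2 c3 c5 h. move: (#|Sx :&: Sy|) c3 c4 c5 => I c3 c4 c5. move: (#|Sx :|: Sy|) c2 c3 => U c2 c3. move: (#|(Sx :|: Sy) :\ i|) (hdist x y) c1 c2 h => D hd. lia.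
rewrite -(card_in_imset key).
apply: leq_trans (card_nonzero q).
apply: subset_leq_card; apply/subsetP => k /imsetP [x]; rewrite !inE => /andP [_ h] ->.
by [].
Qed.


Set Implicit Arguments.
Section Cons.
Variables (n w : nat) (B : {set {set 'I_n}}).
Hypothesis hw : 2 <= w.
Hypothesis hn : w < n.
Hypothesis S : steiner_system 2 w n B.
Let r := (n - 1) %/ (w - 1).
Let Bx (i : 'I_n) := [set b in B | i \in b].
Let Hd : forall i, #|Bx i| = r := (steiner_size n w B hw hn S).2.2.

Definition lab (b : {set 'I_n}) (i : 'I_n) : 'I_r.+1 :=
  if i \in b then inord (index b (enum (Bx i))).+1 else ord0.

Definition cw (b : {set 'I_n}) : word n r.+1 := [ffun i => lab b i].

Lemma lab_val b i : b \in B -> i \in b -> val (lab b i) = (index b (enum (Bx i))).+1.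
Proof.
move=> bB ib; rewrite /lab ib /= inordK // ltnS -(Hd i) cardE index_mem mem_enum.
by rewrite !inE bB ib.
Qed.

Lemma supp_cw b : b \in B -> [set i | val (cw b i) != 0] = b.
Proof.
move=> bB; apply/setP => i; rewrite inE ffunE.
case ib: (i \in b); first by rewrite lab_val.
by rewrite /lab ib.
Qed.

Lemma lab_inj b b' i : b \in B -> b' \in B -> i \in b -> i \in b' -> lab b i = lab b' i -> b = b'.
Proof.
move=> bB b'B ib ib' /(congr1 val); rewrite !lab_val // => -[e].
have m1 : b \in enum (Bx i) by rewrite mem_enum !inE bB ib.
have m2 : b' \in enum (Bx i) by rewrite mem_enum !inE b'B ib'.
by rewrite -(nth_index b m1) e nth_index.
Qed.

Lemma inter_le1 b b' : b \in B -> b' \in B -> b != b' -> #|b :&: b'| <= 1.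
Proof.
move=> bB b'B nbb; rewrite leqNgt; apply/negP => /card_gt1P [a [a' [ha ha' naa]]].
case: S => _ Ht.
have T2 : #|[set a; a']| = 2 by rewrite cards2 naa.
have /cards1P [c ec] : #|[set c in B | [set a; a'] \subset c]| == 1 by rewrite Ht.
move: ha ha'; rewrite !inE => /andP [ab ab'] /andP [a'b a'b'].
have : b \in [set c in B | [set a; a'] \subset c] by rewrite inE bB subUset !sub1set ab a'b.
have : b' \in [set c in B | [set a; a'] \subset c] by rewrite inE b'B subUset !sub1set ab' a'b'.
rewrite ec !inE => /eqP e1 /eqP e2. by rewrite e1 e2 eqxx in nbb.
Qed.

Lemma cons_code : code_exists n w (2 * w - 2 + 1) r.+1 #|B|.
Proof.
exists (cw @: B); split.
- apply: card_in_imset => b b' bB b'B e.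
  by rewrite -(supp_cw bB) -(supp_cw b'B) e.
- move=> x /imsetP [b bB ->]. rewrite /wt supp_cw //. by case: S => Hk _; apply: Hk.
- move=> x y /imsetP [b bB ->] /imsetP [b' b'B ->] nxy.
  have nbb : b != b' by apply: contraNneq nxy => ->.
  have sub : b :|: b' \subset [set i | cw b i != cw b' i].
    apply/subsetP => i; rewrite !inE => hi.
    case ib: (i \in b); case ib': (i \in b').
    + apply/negP => /eqP e; move: e; rewrite !ffunE => e.
      by move/eqP: nbb; apply; apply: (lab_inj bB b'B ib ib' e).
    + apply/negP => /eqP e; move: (congr1 val e); by rewrite !ffunE (lab_val bB ib) /lab ib' /=.
    + apply/negP => /eqP e; move: (congr1 val e); by rewrite !ffunE (lab_val b'B ib') /lab ib /=.
    + by move: hi; rewrite ib ib'.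
  have c1 : #|b :|: b'| <= hdist (cw b) (cw b') := subset_leq_card sub.
  have c2 := cardsU b b'. have c3 := inter_le1 bB b'B nbb.
  case: S => Hk _; rewrite (Hk b bB) (Hk b' b'B) in c2.
  move: (#|b :&: b'|) (#|b :|: b'|) (hdist (cw b) (cw b')) c1 c2 c3 => I U D. lia.
Qed.
End Cons.
Unset Implicit Arguments.
Theorem mainTheorem8 (w n : nat) :
  2 <= w -> w < n -> steiner_exists 2 w n ->
  is_q0' 2 w n ((n - 1) %/ (w - 1) + 1).
Proof.
move=> hw hn [B S].
have [H1 [HM Hd]] := steiner_size n w B hw hn S.
rewrite addn1 /is_q0' HM. split; first exact: (@cons_code n w B hw hn S).
move=> q [C [HC Hw Hdist]].
set r := (n-1) %/ (w-1) in H1 Hd *.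
have rpos : 0 < r by rewrite divn_gt0; lia.
have Hsum : \sum_(i : 'I_n) #|[set x in C | val (x i) != 0]| = n * r.
  rewrite (@double_count _ _ C (fun x i => val (x i) != 0)).
  have -> : \sum_(x in C) #|[set i | val (x i) != 0]| = \sum_(x in C) w.
    by apply: eq_bigr => x xC; exact: Hw.
  by rewrite sum_nat_const HC H1.
have [i hi] : exists i : 'I_n, r <= #|[set x in C | val (x i) != 0]|.
  case: (boolP [exists i : 'I_n, r <= #|[set x in C | val (x i) != 0]|]) => [/existsP //|/existsPn h].
  exfalso.
  have : \sum_(i : 'I_n) #|[set x in C | val (x i) != 0]| <= \sum_(i : 'I_n) r.-1.
    apply: leq_sum => i _; have := h i; lia.
  rewrite sum_nat_const card_ord Hsum.
  move=> h1; have h2 : n * r.-1 < n * r by rewrite ltn_mul2l; apply/andP; split; lia.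
  lia.
have := @lower_bound n w q hw C Hw Hdist i. lia.
Qed.
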